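(* Let $\mathcal{G}=(\mathcal{V}_A\cup\mathcal{V}_T,\mathcal{E},w)$ be a weighted bipartite graph with $|\mathcal{V}_A|\le|\mathcal{V}_T|$ having a maximum matching, and let $e^*\in A(\mathcal{G})$ be a bottleneck edge. Let $\{\delta_e\}_{e\in\mathcal{E}}$ be perturbations with perturbed weights $\bar w_e=w_e+\delta_e$ such that for every $x\in\mathcal{E}$: $\bar w_x>\bar w_{e^*}$ if and only if $w_x>w_{e^*}$, and $\bar w_x<\bar w_{e^*}$ if and only if $w_x<w_{e^*}$. Then the bottleneck assignment $e^*$ is robust to $\{\delta_e\}$, i.e. $e^*\in A(\bar{\mathcal{G}})$.
   Context: A weighted bipartite graph $\mathcal{G}=(\mathcal{V}_A\cup\mathcal{V}_T,\mathcal{E},w)$ has disjoint vertex sets $\mathcal{V}_A,\mathcal{V}_T$, edge set $\mathcal{E}\subseteq\mathcal{V}_A\times\mathcal{V}_T$ and real edge weights $w_e$. A matching is a set of pairwise non-adjacent edges; a maximum matching is a matching covering every vertex of $\mathcal{V}_A$. For a graph $H$ with a maximum matching, $b(H)=\min_M\max_{e\in M}w_e$ over its maximum matchings; a bottleneck edge of $H$ is an edge $e$ with $w_e=b(H)$ lying in some maximum matching $M$ with $\max_{e'\in M}w_{e'}=b(H)$; $A(H)$ is the set of bottleneck edges. The perturbed graph $\bar{\mathcal{G}}$ has the same vertices and edges as $\mathcal{G}$ and weights $\bar w_e$; $e^*$ is robust to the perturbation if $e^*\in A(\bar{\mathcal{G}})$. *)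

(* Defs.v *)
From HB Require Import structures.
From mathcomp Require Import all_boot all_order all_algebra.
Set Implicit Arguments. Unset Strict Implicit. Unset Printing Implicit Defensive.
Import Order.TTheory GRing.Theory Num.Theory.
Local Open Scope ring_scope.

(* A bipartite graph with vertex classes VA, VT (finite types) is given by an
   edge set E : {set VA * VT}; weights are a function w : VA * VT -> R
   (only its values on E matter). *)

Section Bottleneck.
Variables (VA VT : finType) (R : realDomainType).
Implicit Types (E M : {set VA * VT}) (w : VA * VT -> R).

Definition is_matching M : Prop :=
  forall e1 e2, e1 \in M -> e2 \in M -> e1 != e2 ->
    (e1.1 != e2.1) /\ (e1.2 != e2.2).

Definition is_max_matching E M : Prop :=
  M \subset E /\ is_matching M /\ (forall a : VA, exists2 e, e \in M & e.1 = a).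

Definition is_max_weight w M (m : R) : Prop :=
  (exists2 e, e \in M & w e = m) /\ (forall e, e \in M -> w e <= m).

Definition is_bottleneck_value E w (b : R) : Prop :=
  (exists M, is_max_matching E M /\ is_max_weight w M b) /\
  (forall M m, is_max_matching E M -> is_max_weight w M m -> b <= m).

Definition bottleneck_edge E w (e : VA * VT) : Prop :=
  e \in E /\
  exists b, [/\ is_bottleneck_value E w b, w e = b &
    exists M, [/\ is_max_matching E M, e \in M & is_max_weight w M b]].

End Bottleneck.

(* Main.v *)
Require Import Defs.
From HB Require Import structures.
From mathcomp Require Import all_boot all_order all_algebra.
Import Order.TTheory GRing.Theory Num.Theory.
Local Open Scope ring_scope.

Lemma seq_max (T : eqType) (R : realDomainType) (f : T -> R) (x : T) (s : seq T) :
  exists2 e, e \in x :: s & forall e', e' \in x :: s -> f e' <= f e.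
Proof.
elim: s x => [|y s IH] x.
  by exists x => [|e']; rewrite ?inE // => /eqP ->.
have [e es He] := IH y.
case: (lerP (f x) (f e)) => hx.
  exists e; first by rewrite inE es orbT.
  by move=> e'; rewrite inE => /orP [/eqP ->|]; [|apply: He].
exists x; first by rewrite inE eqxx.
move=> e'; rewrite inE => /orP [/eqP -> //|/He h].
exact: le_trans h (ltW hx).
Qed.

Lemma set_max (T : finType) (R : realDomainType) (f : T -> R) (M : {set T}) x :
  x \in M -> exists2 e, e \in M & forall e', e' \in M -> f e' <= f e.
Proof.
move=> xM.
have : x \in enum M by rewrite mem_enum.
case: (enum M) (mem_enum M) => [|y s] Hs //= _.
have [e es He] := @seq_max T R f y s.
exists e; first by rewrite -Hs.
by move=> e' e'M; apply: He; rewrite Hs.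
Qed.

Theorem proposition2 (VA VT : finType) (R : realDomainType)
  (E : {set VA * VT}) (w delta : VA * VT -> R) (estar : VA * VT) :
  (#|VA| <= #|VT|)%N ->
  (exists M, is_max_matching E M) ->
  bottleneck_edge E w estar ->
  (forall x, x \in E ->
     ((w x + delta x > w estar + delta estar) <-> (w x > w estar)) /\
     ((w x + delta x < w estar + delta estar) <-> (w x < w estar))) ->
  bottleneck_edge E (fun e => w e + delta e) estar.
Proof.
move=> _ _ [eE [b [[_ bmin] web [M0 [mM0 eM0 [_ hM0]]]]]] Hd.
have le' : forall x, x \in E -> w x <= w estar -> w x + delta x <= w estar + delta estar.
  move=> x xE h; rewrite leNgt; apply/negP => /(proj1 (proj1 (Hd x xE))).
  by rewrite ltNge h.
have lt' : forall x, x \in E -> w x + delta x < w estar + delta estar -> w x < w estar.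
  by move=> x xE /(proj1 (proj2 (Hd x xE))).
have wM0 : is_max_weight (fun e => w e + delta e) M0 (w estar + delta estar).
  split; first by exists estar.
  move=> e eM; have eE' : e \in E by move: mM0 => [/subsetP S _]; apply: S.
  by apply: le' => //; rewrite web; apply: hM0.
split => //; exists (w estar + delta estar); split => //; last by exists M0.
split; first by exists M0.
move=> M m mM [[e1 e1M e1m] hm].
rewrite leNgt; apply/negP => mlt.
have [_ [_ cov]] := mM.
have [x xM _] := cov estar.1.
have [e eM He] := @set_max _ _ w M x xM.
have sub : forall e, e \in M -> e \in E by move: mM => [/subsetP S _].
have : b <= w e.
  apply: (bmin M) => //; split; first by exists e.
  exact: He.
rewrite -web leNgt => /negP; apply; apply: lt' (sub _ eM) _.
exact: le_lt_trans (hm e eM) mlt.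
Qed.
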